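(* Each member of $\mathcal{G}_2$ is cycle-extendable.
   Context: A half biwheel is obtained from a path $P$ of even length (possibly a single vertex) with color classes $A,B$, whose ends $u,v$ lie in $A$, by adding a new vertex $h$ (the hub) adjacent to every vertex of $A$; $u,v$ are the corners. $\mathcal{G}_2$ (double half biwheels) consists of the graphs obtained from two disjoint half biwheels $H_0,H_1$, neither isomorphic to $K_2$, with hubs $h_0,h_1$ and corners $u_0,v_0$ and $u_1,v_1$ respectively, by adding the four edges $h_1h_0$, $v_1v_0$, $u_0h_1$ and $h_0u_1$. A matching covered graph (connected, at least two vertices, every edge in a perfect matching) is cycle-extendable if for every even cycle $C$ the graph $G-V(C)$ has a perfect matching. *)

(* Defs.v *)
From mathcomp Require Import all_boot.
Set Implicit Arguments. Unset Strict Implicit. Unset Printing Implicit Defensive.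

Definition simple_graph (T : finType) (e : rel T) : Prop :=
  symmetric e /\ irreflexive e.

Definition perfect_matching_on (T : finType) (e : rel T) (S : {set T})
    (M : {set {set T}}) : Prop :=
  (forall m, m \in M -> exists x y, [/\ m = [set x; y], e x y, x \in S & y \in S])
  /\ (forall x, x \in S -> #|[set m in M | x \in m]| = 1).

Definition has_perfect_matching (T : finType) (e : rel T) (S : {set T}) : Prop :=
  exists M, perfect_matching_on e S M.

Definition matching_covered (T : finType) (e : rel T) : Prop :=
  [/\ 2 <= #|T|,
      (forall x y : T, connect e x y) &
      (forall x y : T, e x y ->
         exists M, perfect_matching_on e [set: T] M /\ [set x; y] \in M)].

Definition even_cycle (T : finType) (e : rel T) (c : seq T) : Prop :=
  [/\ uniq c, cycle e c, 3 <= size c & ~~ odd (size c)].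

Definition cycle_extendable (T : finType) (e : rel T) : Prop :=
  matching_covered e /\
  forall c : seq T, even_cycle e c -> has_perfect_matching e (~: [set x in c]).

(* Canonical half biwheel on a path P = p_0 p_1 ... p_{2k} (even length 2k)
   with hub h adjacent to all even-indexed path vertices (color class A).
   Vertices: Some i = p_i, None = hub. *)
Definition hbV (k : nat) : finType := option 'I_(k.*2).+1.

Definition hb_adj (k : nat) (x y : hbV k) : bool :=
  match x, y with
  | Some i, Some j => (i.+1 == j :> nat) || (j.+1 == i :> nat)
  | None, Some j => ~~ odd j
  | Some i, None => ~~ odd i
  | None, None => false
  end.

Definition hb_hub (k : nat) : hbV k := None.
Definition hb_u (k : nat) : hbV k := Some ord0.
Definition hb_v (k : nat) : hbV k := Some ord_max.

Definition dhbV (k0 k1 : nat) : finType := (hbV k0 + hbV k1)%type.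

Definition dhb_cross (k0 k1 : nat) (a : hbV k0) (b : hbV k1) : bool :=
  [|| (a == hb_hub k0) && (b == hb_hub k1),
      (a == hb_v k0) && (b == hb_v k1),
      (a == hb_u k0) && (b == hb_hub k1)
    | (a == hb_hub k0) && (b == hb_u k1)].

Definition dhb_adj (k0 k1 : nat) (x y : dhbV k0 k1) : bool :=
  match x, y with
  | inl a, inl b => hb_adj a b
  | inr a, inr b => hb_adj a b
  | inl a, inr b => dhb_cross a b
  | inr b, inl a => dhb_cross a b
  end.

(* (T, e) is a member of G_2: it is isomorphic to a double half biwheel whose
   two half biwheels are not K2, i.e. have paths of positive even length. *)
Definition in_G2 (T : finType) (e : rel T) : Prop :=
  exists k0 k1 : nat, exists f : dhbV k0 k1 -> T,
    [/\ 0 < k0, 0 < k1, bijective f &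
        forall x y, e (f x) (f y) = dhb_adj x y].

(* Main.v *)
Require Import Defs.
From mathcomp Require Import all_boot.
From mathcomp Require Import zify.
Set Implicit Arguments. Unset Strict Implicit. Unset Printing Implicit Defensive.

Section Cyc.
Variables (T : finType) (adj : rel T) (c : seq T).
Hypotheses (Uc : uniq c) (Cc : cycle adj c) (Sc : 3 <= size c) (Sym : symmetric adj).

Definition nb x y := (x \in c) && ((y == next c x) || (y == prev c x)).

Lemma next_out x : x \notin c -> next c x = x.
Proof. by move=> H; rewrite next_nth (negbTE H). Qed.
Lemma prev_out x : x \notin c -> prev c x = x.
Proof. by move=> H; rewrite prev_nth (negbTE H). Qed.

Lemma next_neq_prev x : x \in c -> next c x != prev c x.
Proof.
move=> xc; case/rot_to: xc => i q Hq.
have Ur : uniq (rot i c) by rewrite rot_uniq.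
have Sr : size (rot i c) = size c by rewrite size_rot.
rewrite -(next_rot i Uc) -(prev_rot i Uc) Hq.
rewrite Hq in Ur Sr.
move: Sc; rewrite -Sr.
case: q {Hq} Ur Sr => [|y [|z r]] Ur Sr // _.
have -> : next [:: x, y, z & r] x = y by rewrite /= eqxx.
rewrite prev_nth mem_head.
move: Ur => /andP [] Hx /andP [] Hy _.
rewrite (memNindex Hx) /=.
have -> : nth x (z :: r) (size r) = last z r.
  by rewrite (last_nth x).
apply/eqP => E; move: Hy; rewrite E.
by rewrite mem_last.
Qed.

Lemma nb_mem x y : nb x y -> (x \in c) && (y \in c).
Proof.
by case/andP => xc /orP [] /eqP ->; rewrite xc ?mem_next ?mem_prev.
Qed.

Lemma nb_sym x y : nb x y = nb y x.
Proof.
suff H : forall x y, nb x y -> nb y x.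
  by apply/idP/idP; apply: H.
move=> a b Hab; have /andP [ac bc] := nb_mem Hab.
move: Hab; rewrite /nb ac bc /= => /orP [] /eqP ->.
  by rewrite prev_next // eqxx orbT.
by rewrite next_prev // eqxx.
Qed.

Lemma nb_adj x y : nb x y -> adj x y.
Proof.
case/andP => xc /orP [] /eqP ->; first exact: next_cycle.
by rewrite Sym; exact: prev_cycle.
Qed.

Lemma nb_next x : x \in c -> nb x (next c x).
Proof. by move=> xc; rewrite /nb xc eqxx. Qed.
Lemma nb_prev x : x \in c -> nb x (prev c x).
Proof. by move=> xc; rewrite /nb xc eqxx orbT. Qed.

Lemma deg2 x p q : x \in c -> (forall y, nb x y -> y = p \/ y = q) ->
  nb x p /\ nb x q.
Proof.
move=> xc H.
have Hn := H _ (nb_next xc); have Hp := H _ (nb_prev xc).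
have D := next_neq_prev xc.
case: Hn => En; case: Hp => Ep.
- by move: D; rewrite En Ep eqxx.
- by rewrite -En -Ep; split; [apply: nb_next | apply: nb_prev].
- by rewrite -En -Ep; split; [apply: nb_prev | apply: nb_next].
- by move: D; rewrite En Ep eqxx.
Qed.

Lemma deg1 x p : x \in c -> (forall y, nb x y -> y = p) -> False.
Proof.
move=> xc H; have D := next_neq_prev xc.
by move: D; rewrite (H _ (nb_next xc)) (H _ (nb_prev xc)) eqxx.
Qed.

Lemma nb_cases x y : nb x y -> y = next c x \/ y = prev c x.
Proof. by case/andP => _ /orP [] /eqP ->; [left|right]. Qed.

Lemma nb3 x y1 y2 y3 : nb x y1 -> nb x y2 -> nb x y3 ->
  y1 != y2 -> y1 != y3 -> y2 != y3 -> False.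
Proof.
move=> /nb_cases [] -> /nb_cases [] -> /nb_cases [] -> //; rewrite ?eqxx //.
Qed.

Lemma cnt0 x (Q : pred T) : ~~ Q x -> (forall y, adj x y -> ~~ Q y) ->
  Q (next c x) + Q (prev c x) = 0.
Proof.
move=> Qx H; case xc: (x \in c).
  rewrite (negbTE (H _ (next_cycle Cc xc))).
  have Ap : adj x (prev c x) by rewrite Sym; exact: prev_cycle.
  by rewrite (negbTE (H _ Ap)).
by rewrite next_out ?prev_out ?xc // (negbTE Qx).
Qed.

Lemma cnt1 x (Q : pred T) y1 : ~~ Q x -> (forall y, adj x y -> Q y -> y = y1) ->
  Q y1 -> Q (next c x) + Q (prev c x) = nb x y1.
Proof.
move=> Qx H Q1; case xc: (x \in c); last first.
  by rewrite next_out ?prev_out ?xc // (negbTE Qx) /nb xc.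
have An := next_cycle Cc xc.
have Ap : adj x (prev c x) by rewrite Sym; exact: prev_cycle.
have D := next_neq_prev xc.
rewrite /nb xc /=.
case Qn: (Q (next c x)); case Qp: (Q (prev c x)).
- by move: D; rewrite (H _ An Qn) (H _ Ap Qp) eqxx.
- by rewrite (H _ An Qn) eqxx.
- by rewrite (H _ Ap Qp) eqxx orbT.
- case: eqP => [E|_]; first by rewrite -E Q1 in Qn.
  by case: eqP => [E|_] //; rewrite -E Q1 in Qp.
Qed.

Lemma cnt2 x (Q : pred T) y1 y2 : ~~ Q x ->
  (forall y, adj x y -> Q y -> y = y1 \/ y = y2) ->
  y1 != y2 -> Q y1 -> Q y2 -> Q (next c x) + Q (prev c x) = nb x y1 + nb x y2.
Proof.
move=> Qx H D12 Q1 Q2; case xc: (x \in c); last first.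
  by rewrite next_out ?prev_out ?xc // (negbTE Qx) /nb xc.
have D21 : y2 != y1 by rewrite eq_sym.
have An := next_cycle Cc xc.
have Ap : adj x (prev c x) by rewrite Sym; exact: prev_cycle.
have D := next_neq_prev xc.
rewrite /nb xc /=.
case Qn: (Q (next c x)); case Qp: (Q (prev c x)).
- case: (H _ An Qn) => En; case: (H _ Ap Qp) => Ep;
    try by move: D; rewrite En Ep eqxx.
  + by rewrite En Ep !eqxx (negbTE D12) (negbTE D21) ?orbT.
  + by rewrite En Ep !eqxx (negbTE D12) (negbTE D21) ?orbT.
- have Np : forall y, Q y -> (y == prev c x) = false.
    by move=> y Qy; apply/negbTE; apply/eqP => E; rewrite -E Qy in Qp.
  rewrite (Np _ Q1) (Np _ Q2) !orbF.
  by case: (H _ An Qn) => ->; rewrite eqxx ?(negbTE D12) ?(negbTE D21).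
- have Np : forall y, Q y -> (y == next c x) = false.
    by move=> y Qy; apply/negbTE; apply/eqP => E; rewrite -E Qy in Qn.
  rewrite (Np _ Q1) (Np _ Q2) /=.
  by case: (H _ Ap Qp) => ->; rewrite eqxx ?(negbTE D12) ?(negbTE D21).
- have Np : forall y, Q y -> (y == prev c x) = false.
    by move=> y Qy; apply/negbTE; apply/eqP => E; rewrite -E Qy in Qp.
  have Nn : forall y, Q y -> (y == next c x) = false.
    by move=> y Qy; apply/negbTE; apply/eqP => E; rewrite -E Qy in Qn.
  by rewrite (Np _ Q1) (Np _ Q2) (Nn _ Q1) (Nn _ Q2).
Qed.

Lemma next_perm : perm_eq (map (next c) c) c.
Proof.
apply: uniq_perm.
- by rewrite (map_inj_uniq (can_inj (prev_next Uc))).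
- done.
- move=> y; apply/mapP/idP => [[x xc ->]|yc]; first by rewrite mem_next.
  by exists (prev c y); rewrite ?mem_prev // next_prev.
Qed.

Lemma sum_next (F : T -> nat) :
  \sum_(x <- c) F (next c x) = \sum_(x <- c) F x.
Proof. by rewrite -(big_map (next c) xpredT) (perm_big _ next_perm). Qed.

Lemma xor_even (col : pred T) :
  ~~ odd (\sum_(x <- c) (col x != col (next c x))).
Proof.
have E : \sum_(x <- c) ((col x != col (next c x)) + (col x && col (next c x)).*2)
       = \sum_(x <- c) (col x + col (next c x)).
  by apply: eq_bigr => x _; case: (col x); case: (col (next c x)).
move: E; rewrite big_split /= big_split /= (sum_next col) addnn.
rewrite -(big_morph double doubleD (erefl 0 : 0.*2 = 0)) => /(congr1 odd).
by rewrite oddD !odd_double addbF => ->.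
Qed.

Lemma split_S (W : T -> T -> bool) (S : pred T) :
  (forall x y, W x y = W y x) -> (forall x y, W x y -> S x != S y) ->
  \sum_(x <- c) W x (next c x) =
  \sum_(x <- c | S x) (W x (next c x) + W x (prev c x)).
Proof.
move=> Ws WS.
rewrite (bigID S) /= big_split /=; congr (_ + _).
rewrite big_mkcond [RHS]big_mkcond /=.
have := sum_next (fun y => if S y then (W y (prev c y) : nat) else 0).
move=> /= <-.
apply: eq_bigr => x _; rewrite prev_next // (Ws (next c x) x).
case Wx: (W x (next c x)); last by case: (S x); case: (S (next c x)).
by move: (WS _ _ Wx); case: (S x); case: (S (next c x)).
Qed.

Lemma to_finsum (S : pred T) (G : T -> nat) :
  (forall x, S x -> x \notin c -> G x = 0) ->
  \sum_(x <- c | S x) G x = \sum_(x | S x) G x.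
Proof.
move=> HG; rewrite big_mkcond [RHS]big_mkcond big_uniq //=.
rewrite [RHS](bigID (fun x => x \in c)) /= [X in _ = _ + X]big1 ?addn0 //.
by move=> x xc; case Sx: (S x) => //; apply: HG.
Qed.

Lemma cut_parity (Low : pred T) :
  ~~ odd (\sum_(x | ~~ Low x) (Low (next c x) + Low (prev c x))).
Proof.
have := xor_even Low.
rewrite (@split_S (fun x y => Low x != Low y) (fun x => ~~ Low x)); last 2 first.
- by move=> x y; rewrite eq_sym.
- by move=> x y; case: (Low x); case: (Low y).
rewrite (eq_bigr (fun x => Low (next c x) + Low (prev c x))); last first.
  by move=> x /negbTE ->; case: (Low (next c x)); case: (Low (prev c x)).
rewrite (@to_finsum (fun x => ~~ Low x) (fun x => Low (next c x) + Low (prev c x))) //.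
by move=> x /negbTE Lx xc; rewrite next_out // prev_out // Lx.
Qed.

Lemma bad_parity (Irr : irreflexive adj) (Ev : ~~ odd (size c)) (col S : pred T) :
  (forall x y, adj x y -> col x == col y -> S x != S y) ->
  ~~ odd (\sum_(x | S x) ((adj x (next c x) && (col x == col (next c x)))
                         + (adj x (prev c x) && (col x == col (prev c x))))).
Proof.
move=> HS.
have E : \sum_(x <- c) (col x != col (next c x)) +
         \sum_(x <- c) (adj x (next c x) && (col x == col (next c x))) = size c.
  rewrite -big_split /= -sum1_size big_seq [RHS]big_seq.
  apply: eq_bigr => x xc; rewrite (next_cycle Cc xc) /=.
  by case: (col x); case: (col (next c x)).
have : ~~ odd (\sum_(x <- c) (adj x (next c x) && (col x == col (next c x)))).
  by move: Ev; rewrite -E oddD (negbTE (xor_even col)).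
rewrite (@split_S (fun x y => adj x y && (col x == col y)) S); last 2 first.
- by move=> x y; rewrite Sym eq_sym.
- by move=> x y /andP [] A C; apply: HS.
rewrite (@to_finsum S (fun x => (adj x (next c x) && (col x == col (next c x)))
                         + (adj x (prev c x) && (col x == col (prev c x))))) //.
by move=> x _ xc; rewrite next_out // prev_out // Irr.
Qed.

End Cyc.

Lemma pm_of_inv (T : finType) (e : rel T) (R : {set T}) (s : T -> T) :
  (forall x, x \in R -> [/\ s x \in R, s (s x) = x, s x != x & e x (s x)]) ->
  perfect_matching_on e R [set [set x; s x] | x in R].
Proof.
move=> H; split.
  move=> m /imsetP [x xR ->]; have [H1 H2 H3 H4] := H x xR.
  by exists x, (s x); split.
move=> x xR.
have -> : [set m in [set [set x0; s x0] | x0 in R] | x \in m] = [set [set x; s x]].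
  apply/setP => m; rewrite !inE; apply/andP/eqP.
    case=> /imsetP [y yR ->]; rewrite !inE => /orP [] /eqP E; first by rewrite E.
    have [_ Hy _ _] := H y yR.
    have Ey : y = s x by rewrite E Hy.
    by rewrite -E Ey setUC.
  move=> ->; split; last by rewrite !inE eqxx.
  by apply/imsetP; exists x.
by rewrite cards1.
Qed.

Inductive or5 (P1 P2 P3 P4 P5 : Prop) : Prop :=
  Or51 of P1 | Or52 of P2 | Or53 of P3 | Or54 of P4 | Or55 of P5.
Notation "[ \/ P1 , P2 , P3 , P4 | P5 ]" := (or5 P1 P2 P3 P4 P5) : type_scope.

Lemma eqSome (T : eqType) (a b : T) : (Some a == Some b) = (a == b). Proof. by []. Qed.
Lemma eqSN (T : eqType) (a : T) : (Some a == None) = false. Proof. by []. Qed.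
Lemma eqNS (T : eqType) (a : T) : (None == Some a) = false. Proof. by []. Qed.
Lemma eqNN (T : eqType) : (None == None :> option T) = true. Proof. by []. Qed.
Lemma ordE n (a b : 'I_n) : (a == b) = (val a == val b). Proof. by []. Qed.
Lemma inordK' n i : i <= n -> (inord i : 'I_n.+1) = i :> nat.
Proof. by move=> H; rewrite inordK. Qed.

Lemma sum_supp (T : finType) (P : pred T) (F : T -> nat) (L : seq T) :
  uniq L -> all P L -> (forall x, P x -> x \notin L -> F x = 0) ->
  \sum_(x | P x) F x = \sum_(x <- L) F x.
Proof.
move=> UL AL HF.
rewrite (bigID (fun x => x \in L)) /= [X in _ + X]big1 ?addn0; last first.
  by move=> x /andP [] Px xL; apply: HF.
rewrite big_uniq //; apply: eq_bigl => x.
by case xL: (x \in L); rewrite ?andbF ?andbT //; move/allP: AL => /(_ x xL).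
Qed.

Section D.
Variables k0 k1 : nat.
Hypotheses (K0 : 0 < k0) (K1 : 0 < k1).
Local Notation V := (dhbV k0 k1).
Definition vA (i : nat) : V := inl (Some (inord i)).
Definition vB (i : nat) : V := inr (Some (inord i)).
Definition g0 : V := inl None.
Definition g1 : V := inr None.
Local Notation adj := (@dhb_adj k0 k1).

Ltac sadj := rewrite /vA /vB /g0 /g1 /= /dhb_cross /hb_v /hb_u /hb_hub
   ?eqSome ?eqSN ?eqNS ?eqNN ?ordE /= ?inordK' ?andbF ?andbT ?orbF ?orFb //.

Lemma vcase (x : V) :
  [\/ exists2 i, i <= k0.*2 & x = vA i, x = g0,
      exists2 i, i <= k1.*2 & x = vB i | x = g1].
Proof.
case: x => [[i|]|[i|]].
- by apply: Or41; exists i; [rewrite -ltnS ltn_ord | rewrite /vA inord_val].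
- by apply: Or42.
- by apply: Or43; exists i; [rewrite -ltnS ltn_ord | rewrite /vB inord_val].
- by apply: Or44.
Qed.

Lemma adj_sym : symmetric adj.
Proof.
move=> [[i|]|[i|]] [[j|]|[j|]] //=; rewrite /hb_adj //; by rewrite orbC.
Qed.

Lemma adj_irr : irreflexive adj.
Proof.
move=> [[i|]|[i|]] //=; rewrite /hb_adj; apply/negbTE; rewrite negb_or;
by apply/andP; split; apply/eqP; lia.
Qed.

Lemma vA_inj i j : i <= k0.*2 -> j <= k0.*2 -> vA i = vA j -> i = j.
Proof.
move=> Hi Hj E; have := congr1 (fun x : V => if x is inl (Some a) then val a else 0) E.
by rewrite /= !inordK'.
Qed.
Lemma vB_inj i j : i <= k1.*2 -> j <= k1.*2 -> vB i = vB j -> i = j.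
Proof.
move=> Hi Hj E; have := congr1 (fun x : V => if x is inr (Some a) then val a else 0) E.
by rewrite /= !inordK'.
Qed.

Lemma nbrA i y : i <= k0.*2 -> adj (vA i) y ->
  [\/ (y = vA i.+1 /\ i < k0.*2), (y = vA i.-1 /\ 0 < i), (y = g0 /\ ~~ odd i),
      (y = g1 /\ i = 0) | (y = vB k1.*2 /\ i = k0.*2)].
Proof.
move=> Hi; case: (vcase y) => [[j Hj ->]|->|[j Hj ->]|->]; sadj.
- case/orP => /eqP E.
    by apply: Or51; split; [rewrite E | lia].
  by apply: Or52; split; [rewrite -E | lia].
- by move=> H; apply: Or53.
- by case/andP => /eqP -> /eqP ->; apply: Or55.
- by move/eqP => ->; apply: Or54.
Qed.

Lemma nbrg0 y : adj g0 y ->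
  [\/ exists2 j, j <= k0.*2 & (y = vA j /\ ~~ odd j), y = g1 | y = vB 0].
Proof.
case: (vcase y) => [[j Hj ->]|->|[j Hj ->]|->]; sadj.
- by move=> H; apply: Or31; exists j.
- by move/eqP => ->; apply: Or33.
- by move=> _; apply: Or32.
Qed.

Lemma nbrg1 y : adj g1 y ->
  [\/ exists2 j, j <= k1.*2 & (y = vB j /\ ~~ odd j), y = g0 | y = vA 0].
Proof.
case: (vcase y) => [[j Hj ->]|->|[j Hj ->]|->]; sadj.
- by move/eqP => ->; apply: Or33.
- by move=> _; apply: Or32.
- by move=> H; apply: Or31; exists j.
Qed.


Lemma vA0_neq : vA 0 != vA k0.*2.
Proof. by apply/eqP => /vA_inj => /(_ (leq0n _) (leqnn _)); lia. Qed.
Lemma vB0_neq : vB 0 != vB k1.*2.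
Proof. by apply/eqP => /vB_inj => /(_ (leq0n _) (leqnn _)); lia. Qed.

Definition isR (x : V) := if x is inr _ then true else false.
Definition colx (x : V) :=
  match x with inl (Some a) => odd a | inr (Some a) => odd a | _ => true end.

Lemma colA i : i <= k0.*2 -> colx (vA i) = odd i.
Proof. by move=> H; rewrite /= inordK'. Qed.
Lemma colB i : i <= k1.*2 -> colx (vB i) = odd i.
Proof. by move=> H; rewrite /= inordK'. Qed.

Lemma HScol x y : adj x y -> colx x == colx y -> ~~ isR x != ~~ isR y.
Proof.
case: (vcase x) => [[i Hi ->]|->|[i Hi ->]|->];
case: (vcase y) => [[j Hj ->]|->|[j Hj ->]|->];
rewrite ?colA ?colB //; sadj; rewrite -?modn2; try lia.
Qed.

Ltac clean := repeat match goal with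
 | H : is_true (_ \in _) |- _ => clear H
 | H : is_true (~~ (_ \in _)) |- _ => clear H
 | H : is_true (nb _ _ _) |- _ => clear H
 | H : is_true (uniq _) |- _ => clear H
 | H : is_true (cycle _ _) |- _ => clear H
 | H : is_true (~~ odd (size _)) |- _ => clear H
 | H : is_true (~~ odd (\sum_(_ <- _) _)) |- _ => clear H
 end.
Ltac slia := clean; lia.

Section Cy.
Variable c : seq V.
Hypotheses (Uc : uniq c) (Cc : cycle adj c) (Sc : 2 < size c) (Ev : ~~ odd (size c)).

Lemma patterns : nb c g0 g1 = nb c (vA k0.*2) (vB k1.*2) /\
                 nb c (vA 0) g1 = nb c g0 (vB 0).
Proof.
have H2 := bad_parity Uc Cc adj_sym adj_irr Ev HScol.
rewrite (@sum_supp _ _ _ [:: g0; vA k0.*2]) in H2; first last.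
- move=> x; rewrite !inE; case: (vcase x) => [[i Hi ->]|->|[i Hi ->]|->] //=.
  + move=> _ Hx.
    apply: (cnt0 Cc adj_sym (Q := fun y => adj (vA i) y && (colx (vA i) == colx y))).
      by rewrite adj_irr.
    move=> y /[dup] A /(nbrA Hi) [[-> H]|[-> H]|[-> H]|[-> H]|[-> H]];
      rewrite ?colA ?colB //= ?A ?odd_double //; try slia.
    by move: Hx; rewrite H eqxx.
- by [].
- by [].
rewrite !big_cons big_nil /= in H2.
rewrite (cnt1 Uc Cc Sc adj_sym (Q := fun y => adj g0 y && (colx g0 == colx y)) (y1 := g1)) // in H2; last first.
  move=> y _ /andP [] /nbrg0 [[j Hj [-> O]]|->|->] //=; rewrite ?inordK' //.
  by move: O; case: (odd j).
rewrite (cnt1 Uc Cc Sc adj_sym (Q := fun y => adj (vA k0.*2) y && (colx (vA k0.*2) == colx y)) (y1 := vB k1.*2)) // in H2; last first.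
  + rewrite colA // colB // !odd_double eqxx andbT; sadj; by rewrite !eqxx.
  + move=> y _ /andP [] /(nbrA (leqnn _)) [[-> H]|[-> H]|[-> H]|[-> H]|[-> H]] //;
      rewrite ?colA ?odd_double //; try slia.
  + by rewrite adj_irr.
have H1 := cut_parity Uc isR.
rewrite (@sum_supp _ _ _ [:: g0; vA 0; vA k0.*2]) in H1; first last.
- move=> x; rewrite !inE; case: (vcase x) => [[i Hi ->]|->|[i Hi ->]|->] //=.
  + move=> _ Hx; apply: (cnt0 Cc adj_sym) => // y.
    case/(nbrA Hi) => // [[->]|[->]|[->]|[-> E]|[-> E]] //.
    * by move: Hx; rewrite E eqxx.
    * by move: Hx; rewrite E eqxx orbT.
- by [].
- by rewrite /= !inE vA0_neq.
rewrite !big_cons big_nil /= in H1.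
rewrite (cnt2 Uc Cc Sc adj_sym (Q := isR) (y1 := g1) (y2 := vB 0)) // in H1; last first.
  by move=> y /nbrg0 [[j _ [-> _]]| -> | ->] //= _; [left|right].
rewrite (cnt1 Uc Cc Sc adj_sym (Q := isR) (y1 := g1)) // in H1; last first.
  move=> y /(nbrA (leq0n _)) [[->]|[->]|[->]|[->]|[-> E]] //; slia.
rewrite (cnt1 Uc Cc Sc adj_sym (Q := isR) (y1 := vB k1.*2)) // in H1; last first.
  move=> y /(nbrA (leqnn _)) [[->]|[->]|[->]|[-> E]|[->]] //; slia.
move: H1 H2.
by case: (nb c g0 g1); case: (nb c g0 (vB 0)); case: (nb c (vA 0) g1);
   case: (nb c (vA k0.*2) (vB k1.*2)).
Qed.


Lemma nbin x y : nb c x y -> y \in c.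
Proof. by case/nb_mem/andP. Qed.
Lemma nbin1 x y : nb c x y -> x \in c.
Proof. by case/nb_mem/andP. Qed.

Lemma vA_neq i j : i <= k0.*2 -> j <= k0.*2 -> i != j -> vA i != vA j.
Proof. by move=> Hi Hj N; apply/eqP => /vA_inj => /(_ Hi Hj) E; rewrite E eqxx in N. Qed.

Lemma nbA i y : i <= k0.*2 -> nb c (vA i) y ->
  [\/ (y = vA i.+1 /\ i < k0.*2), (y = vA i.-1 /\ 0 < i), (y = g0 /\ ~~ odd i),
      (y = g1 /\ i = 0) | (y = vB k1.*2 /\ i = k0.*2)].
Proof. by move=> Hi H; apply: nbrA => //; exact: (nb_adj Cc adj_sym H). Qed.

Lemma oddF i : i <= k0.*2 -> odd i -> vA i \in c -> vA i.-1 \in c /\ vA i.+1 \in c.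
Proof.
move=> Hi Oi xc.
have [] : nb c (vA i) (vA i.-1) /\ nb c (vA i) (vA i.+1).
  apply: (deg2 Uc Sc xc) => y /(nbA Hi) [[-> _]|[-> _]|[-> E]|[-> E]|[-> E]].
  - by right.
  - by left.
  - by rewrite Oi in E.
  - by move: Oi; rewrite E.
  - by move: Oi; rewrite E odd_double.
by move=> /nbin -> /nbin ->.
Qed.

Lemma desc t : t < k0.*2 -> vA t \in c -> vA t.+1 \notin c -> ~~ odd t /\ nb c (vA t) g0.
Proof.
move=> Ht tc tn.
have Ot : ~~ odd t.
  apply/negP => Ot; have [_ H] := oddF (ltnW Ht) Ot tc; by rewrite H in tn.
split => //.
have NN : forall y, nb c (vA t) y -> y <> vA t.+1.
  by move=> y /nbin yc E; rewrite E in yc; rewrite yc in tn.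
case: (posnP t) => [E0 | Tp].
- have [] := deg2 Uc Sc (p := g0) (q := g1) tc; last by [].
  move=> y /[dup] /NN Ny /(nbA (ltnW Ht)) [[E _]|[_ H]|[E _]|[E _]|[_ H]].
  + by case: (Ny E).
  + slia.
  + by left.
  + by right.
  + slia.
- have [] := deg2 Uc Sc (p := vA t.-1) (q := g0) tc; last by [].
  move=> y /[dup] /NN Ny /(nbA (ltnW Ht)) [[E _]|[E H]|[E _]|[_ H]|[_ H]].
  + by case: (Ny E).
  + by left.
  + by right.
  + slia.
  + slia.
Qed.

Lemma asc s : 0 < s -> s <= k0.*2 -> vA s \in c -> vA s.-1 \notin c ->
  ~~ odd s /\ nb c (vA s) g0.
Proof.
move=> Hs0 Hs sc sn.
have Os : ~~ odd s.
  apply/negP => Os; have [H _] := oddF Hs Os sc; by rewrite H in sn.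
split => //.
have NN : forall y, nb c (vA s) y -> y <> vA s.-1.
  by move=> y /nbin yc E; rewrite E in yc; rewrite yc in sn.
have [Hlt|Heq] : s < k0.*2 \/ s = k0.*2 by slia.
- have [] := deg2 Uc Sc (p := vA s.+1) (q := g0) sc; last by [].
  move=> y /[dup] /NN Ny /(nbA Hs) [[E _]|[E _]|[E _]|[_ H]|[_ H]].
  + by left.
  + by case: (Ny E).
  + by right.
  + slia.
  + slia.
- have [] := deg2 Uc Sc (p := g0) (q := vB k1.*2) sc; last by [].
  move=> y /[dup] /NN Ny /(nbA Hs) [[E H]|[E _]|[E _]|[_ H]|[E _]].
  + slia.
  + by case: (Ny E).
  + by left.
  + slia.
  + by right.
Qed.

Lemma find_desc i j : vA i \in c -> i < j -> j <= k0.*2 -> vA j \notin c ->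
  exists2 t, i <= t < j & (vA t \in c) && (vA t.+1 \notin c).
Proof.
move=> ic; elim: j => [|j IH] // Hij Hj jn.
case jc: (vA j \in c).
  by exists j; [slia | rewrite jc jn].
have Hij' : i < j.
  rewrite ltn_neqAle -ltnS Hij andbT; apply/eqP => E; by rewrite E jc in ic.
have [t Ht1 Ht2] := IH Hij' (ltnW Hj) (negbT jc).
by exists t => //; slia.
Qed.

Lemma find_asc j l : vA j \notin c -> j < l -> l <= k0.*2 -> vA l \in c ->
  exists2 s, j < s <= l & (vA s.-1 \notin c) && (vA s \in c).
Proof.
move=> jn; elim: l => [|l IH] // Hjl Hl lc.
case lc': (vA l \in c).
  have Hjl' : j < l.
    rewrite ltn_neqAle -ltnS Hjl andbT; apply/eqP => E; by rewrite E lc' in jn.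
  have [s Hs1 Hs2] := IH Hjl' (ltnW Hl) lc'.
  by exists s => //; slia.
by exists l.+1; [slia | rewrite /= lc' lc].
Qed.

Definition LowA (j : nat) (x : V) := if x is inl (Some a) then (val a < j) else false.

Lemma LowAA j a : a <= k0.*2 -> LowA j (vA a) = (a < j).
Proof. by move=> H; rewrite /= inordK'. Qed.

Lemma convex i j l : i < j -> j < l -> l <= k0.*2 ->
  vA i \in c -> vA j \notin c -> vA l \in c -> False.
Proof.
move=> Hij Hjl Hl ic jn lc.
have [t /andP [Ht1 Ht2] /andP [tc tn]] := find_desc ic Hij (ltnW (leq_trans Hjl Hl)) jn.
have [s /andP [Hs1 Hs2] /andP [sn sc]] := find_asc jn Hjl Hl lc.
have [_ Nt] := desc (t:=t) ltac:(slia) tc tn.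
have [_ Ns] := asc (s:=s) ltac:(slia) ltac:(slia) sc sn.
rewrite nb_sym // in Nt; rewrite nb_sym // in Ns.
have Z : forall x, ~~ LowA j x -> x \notin [:: g0; g1] ->
    LowA j (next c x) + LowA j (prev c x) = 0.
  move=> x; case: (vcase x) => [[a Ha ->]|->|[a Ha ->]|->] //=; rewrite ?inE //.
  - rewrite inordK' // -leqNgt => Hja _.
    case: (ltngtP a j) => [Haj|Haj|Eaj]; first by rewrite ltnNge Hja in Haj.
      apply: (cnt0 Cc adj_sym (Q := LowA j)) => [|y]; first by rewrite LowAA // -leqNgt ltnW.
      move=> /(nbrA Ha) [[-> H]|[-> H]|[-> _]|[-> _]|[-> _]].
      + rewrite LowAA //. slia.
      + by rewrite LowAA; slia.
      + by [].
      + by [].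
      + by [].
    rewrite Eaj next_out // prev_out // LowAA; [by rewrite ltnn | slia].
  - move=> _ _; apply: (cnt0 Cc adj_sym) => // y A.
    case: (vcase y) A => [[a' Ha' ->]|->|[? ? ->]|->] // A.
    rewrite adj_sym in A; case/(nbrA Ha'): A => [[E _]|[E _]|[E _]|[E _]|[E H]] //.
    by rewrite LowAA // H; slia.
have F1 : LowA j (next c g1) + LowA j (prev c g1) = 0.
  rewrite (cnt1 Uc Cc Sc adj_sym (Q := LowA j) (y1 := vA 0)) //; first last.
  - by rewrite /= inordK' //; slia.
  - by move=> y /nbrg1 [[b _ [-> _]]|->|->].
  rewrite nb_sym //; have [_ ->] := patterns.
  case N4: (nb c g0 (vB 0)) => //; exfalso.
  apply: (nb3 Nt Ns N4) => //.
  by apply: vA_neq; slia.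
have F0 : LowA j (next c g0) + LowA j (prev c g0) = 1.
  have Lt : LowA j (vA t) by rewrite /= inordK'; slia.
  have Ls : LowA j (vA s) = false by rewrite /= inordK'; slia.
  have D : vA t != vA s by apply: vA_neq; slia.
  case: (nb_cases Nt) => Et; case: (nb_cases Ns) => Es.
  - by move: D; rewrite Et Es eqxx.
  - by rewrite -Et -Es Lt Ls.
  - by rewrite -Et -Es Lt Ls.
  - by move: D; rewrite Et Es eqxx.
have P := cut_parity Uc (LowA j).
rewrite (@sum_supp _ _ _ [:: g0; g1]) // in P.
rewrite !big_cons big_nil /= in P.
by rewrite F0 F1 in P.
Qed.


Lemma side0 : (exists2 i, i <= k0.*2 & vA i \in c) ->
  g0 \in c /\ exists s t, [/\ ~~ odd s, ~~ odd t, s <= t, t <= k0.*2 &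
     forall i, i <= k0.*2 -> (vA i \in c) = (s <= i <= t)].
Proof.
move=> ex.
pose P := fun i => (i <= k0.*2) && (vA i \in c).
have exP : exists i, P i by case: ex => i Hi ic; exists i; rewrite /P Hi ic.
have [s Ps Hs] := find_ex_minn exP.
have ubP : forall i, P i -> i <= k0.*2 by move=> i /andP[].
case: (ex_maxnP exP ubP) => t Pt Ht.
have st : s <= t by apply: Hs.
move/andP: Ps => [Hs2 sc]; move/andP: Pt => [Ht2 tc].
have Int : forall i, i <= k0.*2 -> (vA i \in c) = (s <= i <= t).
  move=> i Hi; apply/idP/idP.
  - by move=> ic; rewrite Hs ?Ht // /P Hi ic.
  - case/andP => H1 H2; apply/negPn/negP => iN.
    have Hsi : s < i.
      rewrite ltn_neqAle H1 andbT; apply/eqP => E; by rewrite -E sc in iN.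
    have Hit : i < t.
      rewrite ltn_neqAle H2 andbT; apply/eqP => E; by rewrite E tc in iN.
    exact: (convex Hsi Hit Ht2 sc iN tc).
have Es : ~~ odd s.
  apply/negP => Os; have [H _] := oddF Hs2 Os sc.
  have : s <= s.-1 by apply: Hs; rewrite /P H andbT; slia.
  have := odd_gt0 Os; slia.
have Et : ~~ odd t.
  apply/negP => Ot.
  have Ht2' : t < k0.*2.
    rewrite ltn_neqAle Ht2 andbT; apply/eqP => E; by rewrite E odd_double in Ot.
  have [_ H] := oddF Ht2 Ot tc.
  have : t.+1 <= t by apply: Ht; rewrite /P H andbT.
  by rewrite ltnn.
split; last by exists s, t.
apply/negPn/negP => g0n.
have Ng0 : forall x y, nb c x y -> y <> g0.
  by move=> x y /nbin yc E; rewrite E in yc; rewrite yc in g0n.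
case: (ltngtP s t) => [Hst|Hts|Est].
- have [_ N] : nb c (vA s) (vA s.+1) /\ nb c (vA s) g1.
    apply: (deg2 Uc Sc sc) => y Hy.
    have Ny := Ng0 _ _ Hy.
    case: (nbA Hs2 Hy) => [[-> _]|[E H]|[E _]|[-> _]|[E H]].
    + by left.
    + rewrite E in Hy; have := nbin Hy => H'.
      have : s <= s.-1 by apply: Hs; rewrite /P H' andbT; slia.
      slia.
    + by case: (Ny E).
    + by right.
    + slia.
  case: (nbA Hs2 N) => [[]|[]|[]|[_ E]|[]] //.
  rewrite E in N; have [_ P4] := patterns; rewrite P4 in N.
  by rewrite (nbin1 N) in g0n.
- slia.
- apply: (deg1 Uc Sc (p := if s == 0 then g1 else vB k1.*2) sc) => y Hy.
  case: (nbA Hs2 Hy) => [[E H]|[E H]|[E _]|[E H]|[E H]].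
  + rewrite E in Hy; have := nbin Hy => H'.
    have : s.+1 <= t by apply: Ht; rewrite /P H' andbT.
    by rewrite Est ltnn.
  + rewrite E in Hy; have := nbin Hy => H'.
    have : s <= s.-1 by apply: Hs; rewrite /P H' andbT; slia.
    slia.
  + by case: (Ng0 _ _ Hy).
  + by rewrite H eqxx.
  + have -> : (s == 0) = false by apply/negbTE; slia.
    by [].
Qed.

End Cy.

Definition pp (s i : nat) :=
  if i < s then (if odd i then i.-1 else i.+1) else (if odd i then i.+1 else i.-1).

Lemma pp_ok s t n i : ~~ odd s -> ~~ odd t -> s <= t -> t <= n.*2 -> i <= n.*2 ->
  ~~ (s <= i <= t) ->
  [/\ pp s i <= n.*2, ~~ (s <= pp s i <= t), pp s (pp s i) = i &
      (i.+1 == pp s i) || ((pp s i).+1 == i)].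
Proof.
move=> Os Ot st tn Hi Hn.
have Hs2 := odd_double_half s; have Ht2 := odd_double_half t.
have Hi2 := odd_double_half i.
rewrite (negbTE Os) in Hs2; rewrite (negbTE Ot) in Ht2.
rewrite /pp; case: (ltnP i s) => His; case Oi: (odd i); rewrite Oi in Hi2.
- case: i Oi His Hi Hn Hi2 => [//|i] /= Oi His Hi Hn Hi2.
  have -> : i < s by lia.
  rewrite (negbTE Oi); split; lia.
- have -> : i.+1 < s by lia.
  rewrite /= Oi /=; split; lia.
- have -> : (i.+1 < s) = false by lia.
  rewrite /= Oi /=; split; lia.
- case: i Oi His Hi Hn Hi2 => [|i] /= Oi His Hi Hn Hi2; first lia.
  have -> : (i < s) = false by lia.
  move/negbFE: Oi => Oi; rewrite Oi /=; split; lia.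
Qed.

Definition sigma (s0 t0 s1 t1 : nat) (sp : V -> V) (x : V) : V :=
  match x with
  | inl (Some a) => if (s0 <= a <= t0) then sp x else inl (Some (inord (pp s0 a)))
  | inr (Some a) => if (s1 <= a <= t1) then sp x else inr (Some (inord (pp s1 a)))
  | _ => sp x
  end.

Definition special (s0 t0 s1 t1 : nat) (x : V) : bool :=
  match x with
  | inl (Some a) => s0 <= a <= t0
  | inr (Some a) => s1 <= a <= t1
  | _ => true
  end.

Lemma builder s0 t0 s1 t1 sp (R : pred V) :
  ~~ odd s0 -> ~~ odd t0 -> s0 <= t0 -> t0 <= k0.*2 ->
  ~~ odd s1 -> ~~ odd t1 -> s1 <= t1 -> t1 <= k1.*2 ->
  (forall x, ~~ special s0 t0 s1 t1 x -> R x) ->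
  (forall x, R x -> special s0 t0 s1 t1 x ->
     [/\ R (sp x), special s0 t0 s1 t1 (sp x), sp (sp x) = x, sp x != x & adj x (sp x)]) ->
  forall x, R x ->
    [/\ R (sigma s0 t0 s1 t1 sp x), sigma s0 t0 s1 t1 sp (sigma s0 t0 s1 t1 sp x) = x,
        sigma s0 t0 s1 t1 sp x != x & adj x (sigma s0 t0 s1 t1 sp x)].
Proof.
move=> Os0 Ot0 st0 tk0 Os1 Ot1 st1 tk1 HR Hsp x Rx.
have SS : forall z, special s0 t0 s1 t1 z -> sigma s0 t0 s1 t1 sp z = sp z.
  by case=> [[b|]|[b|]] //= ->.
case Sx: (special s0 t0 s1 t1 x).
  have [R1 S1 E1 N1 A1] := Hsp x Rx Sx.
  by rewrite !SS.
case: x Rx Sx => [[a|]|[a|]] //= Rx Sx.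
- have Ha : a <= k0.*2 by rewrite -ltnS ltn_ord.
  have [P1 P2 P3 P4] := pp_ok Os0 Ot0 st0 tk0 Ha (negbT Sx).
  rewrite Sx.
  have Sy : ~~ special s0 t0 s1 t1 (inl (Some (inord (pp s0 a)))) by rewrite /= inordK'.
  split.
  + exact: HR.
  + by rewrite /= inordK' // (negbTE P2) P3 inord_val.
  + apply/eqP => E; have := congr1 (fun z : V => if z is inl (Some b) then val b else 0) E.
    rewrite /= inordK' // => E'; rewrite E' in P4; by move: P4; rewrite orbb; case: eqP => //; lia.
  + by rewrite /= /hb_adj inordK' // eq_sym orbC (eq_sym (pp s0 a).+1).
- have Ha : a <= k1.*2 by rewrite -ltnS ltn_ord.
  have [P1 P2 P3 P4] := pp_ok Os1 Ot1 st1 tk1 Ha (negbT Sx).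
  rewrite Sx.
  have Sy : ~~ special s0 t0 s1 t1 (inr (Some (inord (pp s1 a)))) by rewrite /= inordK'.
  split.
  + exact: HR.
  + by rewrite /= inordK' // (negbTE P2) P3 inord_val.
  + apply/eqP => E; have := congr1 (fun z : V => if z is inr (Some b) then val b else 0) E.
    rewrite /= inordK' // => E'; rewrite E' in P4; by move: P4; rewrite orbb; case: eqP => //; lia.
  + by rewrite /= /hb_adj inordK' // eq_sym orbC (eq_sym (pp s1 a).+1).
Qed.

End D.

Definition swapV k0 k1 (x : dhbV k0 k1) : dhbV k1 k0 :=
  match x with inl a => inr a | inr b => inl b end.

Lemma swapK k0 k1 : cancel (@swapV k0 k1) (@swapV k1 k0).
Proof. by case. Qed.

Lemma swap_inj k0 k1 : injective (@swapV k0 k1).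
Proof. exact: can_inj (@swapK k0 k1). Qed.

Lemma adj_swap k0 k1 (x y : dhbV k0 k1) : dhb_adj (swapV x) (swapV y) = dhb_adj x y.
Proof.
case: x => [a|a]; case: y => [b|b] //=; rewrite /dhb_cross;
  by case: (a == _); case: (a == _); case: (a == _);
     case: (b == _); case: (b == _); case: (b == _).
Qed.

Lemma side1 k0 k1 (K0 : 0 < k0) (K1 : 0 < k1) (c : seq (dhbV k0 k1)) :
  uniq c -> cycle (@dhb_adj k0 k1) c -> 2 < size c -> ~~ odd (size c) ->
  (exists2 i, i <= k1.*2 & vB k0 k1 i \in c) ->
  g1 k0 k1 \in c /\ exists s t, [/\ ~~ odd s, ~~ odd t, s <= t, t <= k1.*2 &
     forall i, i <= k1.*2 -> (vB k0 k1 i \in c) = (s <= i <= t)].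
Proof.
move=> Uc Cc Sc Ev [i Hi ic].
have Uc' : uniq (map (@swapV k0 k1) c) by rewrite (map_inj_uniq (@swap_inj k0 k1)).
have Cc' : cycle (@dhb_adj k1 k0) (map (@swapV k0 k1) c).
  by rewrite cycle_map (eq_cycle (e' := @dhb_adj k0 k1)) // => x y; rewrite /= adj_swap.
have MM : forall x, (swapV x \in map (@swapV k0 k1) c) = (x \in c).
  by move=> x; rewrite (mem_map (@swap_inj k0 k1)).
have := side0 K1 K0 Uc' Cc' ltac:(by rewrite size_map) ltac:(by rewrite size_map).
have -> : g0 k1 k0 = swapV (g1 k0 k1) by [].
rewrite MM => H.
have [|g1c [s [t [H1 H2 H3 H4 H5]]]] := H.
  by exists i => //; rewrite (_ : vA k1 k0 i = swapV (vB k0 k1 i)) // MM.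
split => //; exists s, t; split => // j Hj.
by rewrite -H5 // (_ : vA k1 k0 j = swapV (vB k0 k1 j)) // MM.
Qed.

Definition swap2 (T : eqType) (p q : T) (x : T) := if x == p then q else if x == q then p else x.

Section E.
Variables k0 k1 : nat.
Hypotheses (K0 : 0 < k0) (K1 : 0 < k1).
Local Notation V := (dhbV k0 k1).
Local Notation A := (vA k0 k1).
Local Notation B := (vB k0 k1).
Local Notation G0 := (g0 k0 k1).
Local Notation G1 := (g1 k0 k1).
Local Notation adj := (@dhb_adj k0 k1).

Definition hubsp (a0 b0 : nat) (x : V) : V := swap2 G0 (A a0) (swap2 G1 (B b0) x).

Lemma hubsp_G0 a0 b0 : hubsp a0 b0 G0 = A a0. Proof. by rewrite /hubsp /swap2. Qed.
Lemma hubsp_A a0 b0 : hubsp a0 b0 (A a0) = G0. Proof. by rewrite /hubsp /swap2 /= eqxx. Qed.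
Lemma hubsp_G1 a0 b0 : hubsp a0 b0 G1 = B b0. Proof. by rewrite /hubsp /swap2. Qed.
Lemma hubsp_B a0 b0 : hubsp a0 b0 (B b0) = G1. Proof. by rewrite /hubsp /swap2 /= eqxx. Qed.

Lemma AllA (a : 'I_(k0.*2).+1) : (inl (Some a) : V) = A a.
Proof. by rewrite /vA inord_val. Qed.
Lemma AllB (b : 'I_(k1.*2).+1) : (inr (Some b) : V) = B b.
Proof. by rewrite /vB inord_val. Qed.
Lemma ordle (n : nat) (a : 'I_n.+1) : a <= n.
Proof. by rewrite -ltnS ltn_ord. Qed.

Lemma adjG0A a : a <= k0.*2 -> ~~ odd a -> adj G0 (A a).
Proof. by move=> H O; rewrite /= inordK'. Qed.
Lemma adjG1B b : b <= k1.*2 -> ~~ odd b -> adj G1 (B b).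
Proof. by move=> H O; rewrite /= inordK'. Qed.


Lemma cyc_pm (c : seq V) : uniq c -> cycle adj c -> 2 < size c -> ~~ odd (size c) ->
  exists s : V -> V, forall x, x \notin c ->
    [/\ s x \notin c, s (s x) = x, s x != x & adj x (s x)].
Proof.
move=> Uc Cc Sc Ev.
have [E12 E34] := patterns K0 K1 Uc Cc Sc Ev.
have inc2 : forall x y, nb c x y -> y \in c by move=> x y /nb_mem /andP [].
have inc1 : forall x y, nb c x y -> x \in c by move=> x y /nb_mem /andP [].
case: (boolP [exists a : 'I_(k0.*2).+1, (inl (Some a) : V) \in c]) => [/existsP [a ac] | /existsPn NA];
case: (boolP [exists b : 'I_(k1.*2).+1, (inr (Some b) : V) \in c]) => [/existsP [b bc] | /existsPn NB].
- rewrite AllA in ac; rewrite AllB in bc.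
  have [g0c [s0 [t0 [Os0 Ot0 st0 tk0 I0]]]] := side0 K0 K1 Uc Cc Sc Ev (ex_intro2 (fun i => i <= k0.*2) (fun i => A i \in c) a (ordle a) ac).
  have [g1c [s1 [t1 [Os1 Ot1 st1 tk1 I1]]]] := side1 K0 K1 Uc Cc Sc Ev (ex_intro2 (fun i => i <= k1.*2) (fun i => B i \in c) b (ordle b) bc).
  exists (sigma s0 t0 s1 t1 (hubsp 0 0)) => x xn.
  apply: (@builder _ _ K0 K1 _ _ _ _ _ (fun x => x \notin c) Os0 Ot0 st0 tk0 Os1 Ot1 st1 tk1 _ _ x xn).
  + move=> [[a'|]|[b'|]] //= Sx.
    * by rewrite AllA I0 ?ordle // (negbTE Sx).
    * by rewrite AllB I1 ?ordle // (negbTE Sx).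
  + move=> [[a'|]|[b'|]] /= xn' Sx; exfalso.
    * by rewrite AllA I0 ?ordle // Sx in xn'.
    * by rewrite g0c in xn'.
    * by rewrite AllB I1 ?ordle // Sx in xn'.
    * by rewrite g1c in xn'.
- rewrite AllA in ac.
  have [g0c [s0 [t0 [Os0 Ot0 st0 tk0 I0]]]] := side0 K0 K1 Uc Cc Sc Ev (ex_intro2 (fun i => i <= k0.*2) (fun i => A i \in c) a (ordle a) ac).
  have NBj : forall j, j <= k1.*2 -> B j \notin c by move=> j _; exact: NB.
  have g1n : G1 \notin c.
    apply/negP => g1c.
    have [N1 _] : nb c G1 G0 /\ nb c G1 (A 0).
      apply: (deg2 Uc Sc g1c) => y Hy.
      case: (nbrg1 (nb_adj Cc (@adj_sym k0 k1) Hy)) => [[j Hj [E _]]|->|->]; [| by left | by right].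
      by have := inc2 _ _ Hy; rewrite E (negbTE (NBj _ Hj)).
    rewrite (nb_sym Uc) E12 in N1.
    by have := inc2 _ _ N1; rewrite (negbTE (NBj _ (leqnn _))).
  exists (sigma s0 t0 0 0 (hubsp 0 0)) => x xn.
  apply: (@builder _ _ K0 K1 _ _ _ _ _ (fun x => x \notin c) Os0 Ot0 st0 tk0 _ _ _ _ _ _ x xn) => //.
  + move=> [[a'|]|[b'|]] //= Sx.
    * by rewrite AllA I0 ?ordle // (negbTE Sx).
  + move=> [[a'|]|[b'|]] /= xn' Sx.
    * by exfalso; rewrite AllA I0 ?ordle // Sx in xn'.
    * by exfalso; rewrite g0c in xn'.
    * have E : (inr (Some b') : V) = B 0.
        by rewrite AllB; congr vB; apply/eqP; rewrite -leqn0.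
      rewrite E hubsp_B; split => //.
      have b0 : nat_of_ord b' = 0 by move: Sx; clear; lia.
      by rewrite /g1 /= b0.
    * rewrite hubsp_G1; split => //.
      - exact: NBj.
      - by rewrite /= inordK'.
      - exact: hubsp_B.
      - by rewrite inordK'.
- rewrite AllB in bc.
  have [g1c [s1 [t1 [Os1 Ot1 st1 tk1 I1]]]] := side1 K0 K1 Uc Cc Sc Ev (ex_intro2 (fun i => i <= k1.*2) (fun i => B i \in c) b (ordle b) bc).
  have NAj : forall j, j <= k0.*2 -> A j \notin c by move=> j _; exact: NA.
  have g0n : G0 \notin c.
    apply/negP => g0c.
    have [N1 _] : nb c G0 G1 /\ nb c G0 (B 0).
      apply: (deg2 Uc Sc g0c) => y Hy.
      case: (nbrg0 (nb_adj Cc (@adj_sym k0 k1) Hy)) => [[j Hj [E _]]|->|->]; [| by left | by right].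
      by have := inc2 _ _ Hy; rewrite E (negbTE (NAj _ Hj)).
    rewrite E12 in N1.
    by have := inc1 _ _ N1; rewrite (negbTE (NAj _ (leqnn _))).
  exists (sigma 0 0 s1 t1 (hubsp 0 0)) => x xn.
  apply: (@builder _ _ K0 K1 _ _ _ _ _ (fun x => x \notin c) _ _ _ _ Os1 Ot1 st1 tk1 _ _ x xn) => //.
  + move=> [[a'|]|[b'|]] //= Sx.
    * by rewrite AllB I1 ?ordle // (negbTE Sx).
  + move=> [[a'|]|[b'|]] /= xn' Sx.
    * have E : (inl (Some a') : V) = A 0.
        by rewrite AllA; congr vA; apply/eqP; rewrite -leqn0.
      rewrite E hubsp_A; split => //.
      have a0 : nat_of_ord a' = 0 by move: Sx; clear; lia.
      by rewrite /g0 /= a0.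
    * rewrite hubsp_G0; split => //.
      - exact: NAj.
      - by rewrite /= inordK'.
      - exact: hubsp_A.
      - by rewrite inordK'.
    * by exfalso; rewrite AllB I1 ?ordle // Sx in xn'.
    * by exfalso; rewrite g1c in xn'.
- exfalso.
  have : size c <= size [:: G0; G1].
    apply: uniq_leq_size => // x xc.
    case: x xc => [[a'|]|[b'|]] xc; rewrite ?inE ?eqxx ?orbT //.
    * by rewrite (negbTE (NA a')) in xc.
    * by rewrite (negbTE (NB b')) in xc.
  by rewrite /=; move: Sc; case: (size c) => [|[|[|]]].
Qed.


Lemma spec4 a0 b0 x : special a0 a0 b0 b0 x ->
  [\/ x = G0, x = A a0, x = G1 | x = B b0].
Proof.
case: x => [[a|]|[b|]] /= H.
- by apply: Or42; rewrite AllA; congr vA; apply/eqP; rewrite eqn_leq andbC.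
- by apply: Or41.
- by apply: Or44; rewrite AllB; congr vB; apply/eqP; rewrite eqn_leq andbC.
- by apply: Or43.
Qed.

Lemma specA a0 b0 : a0 <= k0.*2 -> special a0 a0 b0 b0 (A a0).
Proof. by move=> H; rewrite /= inordK' // leqnn. Qed.
Lemma specB a0 b0 : b0 <= k1.*2 -> special a0 a0 b0 b0 (B b0).
Proof. by move=> H; rewrite /= inordK' // leqnn. Qed.

Lemma tmpl a0 b0 sp : ~~ odd a0 -> a0 <= k0.*2 -> ~~ odd b0 -> b0 <= k1.*2 ->
  (forall x, special a0 a0 b0 b0 x ->
     [/\ special a0 a0 b0 b0 (sp x), sp (sp x) = x, sp x != x & adj x (sp x)]) ->
  forall x, [/\ sigma a0 a0 b0 b0 sp (sigma a0 a0 b0 b0 sp x) = x,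
               sigma a0 a0 b0 b0 sp x != x & adj x (sigma a0 a0 b0 b0 sp x)].
Proof.
move=> Oa Ha Ob Hb H x.
have [_ E1 E2 E3] := @builder _ _ K0 K1 _ _ _ _ sp predT Oa Oa (leqnn _) Ha Ob Ob (leqnn _) Hb
  (fun _ _ => isT) (fun x _ Sx => let: And4 a b c d := H x Sx in And5 isT a b c d) x isT.
by split.
Qed.

Lemma sigmaA a0 t0 b0 t1 sp i : i <= k0.*2 -> ~~ (a0 <= i <= t0) ->
  sigma a0 t0 b0 t1 sp (A i) = A (pp a0 i).
Proof. by move=> Hi H; rewrite /vA /= inordK' // (negbTE H). Qed.
Lemma sigmaB a0 t0 b0 t1 sp i : i <= k1.*2 -> ~~ (b0 <= i <= t1) ->
  sigma a0 t0 b0 t1 sp (B i) = B (pp b0 i).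
Proof. by move=> Hi H; rewrite /vB /= inordK' // (negbTE H). Qed.
Lemma sigmaS a0 t0 b0 t1 (sp : V -> V) (x : V) : special a0 t0 b0 t1 x -> sigma a0 t0 b0 t1 sp x = sp x.
Proof. by case: x => [[a|]|[a|]] //= ->. Qed.

Lemma hub_ok a0 b0 : ~~ odd a0 -> a0 <= k0.*2 -> ~~ odd b0 -> b0 <= k1.*2 ->
  forall x, special a0 a0 b0 b0 x ->
  [/\ special a0 a0 b0 b0 (hubsp a0 b0 x), hubsp a0 b0 (hubsp a0 b0 x) = x,
      hubsp a0 b0 x != x & adj x (hubsp a0 b0 x)].
Proof.
move=> Oa Ha Ob Hb x /spec4 [->|->|->|->].
- rewrite hubsp_G0 hubsp_A; split => //; [exact: specA | exact: adjG0A].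
- rewrite hubsp_A hubsp_G0; split => //; rewrite adj_sym; exact: adjG0A.
- rewrite hubsp_G1 hubsp_B; split => //; [exact: specB | exact: adjG1B].
- rewrite hubsp_B hubsp_G1; split => //; rewrite adj_sym; exact: adjG1B.
Qed.

Definition topsp (x : V) : V := swap2 G0 G1 (swap2 (A k0.*2) (B k1.*2) x).
Definition botsp (x : V) : V := swap2 (A 0) G1 (swap2 G0 (B 0) x).

Lemma top_ok x : special k0.*2 k0.*2 k1.*2 k1.*2 x ->
  [/\ special k0.*2 k0.*2 k1.*2 k1.*2 (topsp x), topsp (topsp x) = x,
      topsp x != x & adj x (topsp x)].
Proof.
have CR : dhb_cross (Some (inord k0.*2) : hbV k0) (Some (inord k1.*2) : hbV k1).
  by rewrite /dhb_cross /hb_v !eqSome !ordE /= !inordK' // !eqxx.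
move=> /spec4 [->|->|->|->]; rewrite /topsp /swap2 /= ?eqxx /=.
- by split.
- by rewrite !inordK' // leqnn; split.
- by split.
- by rewrite !inordK' // leqnn; split.
Qed.

Lemma bot_ok x : special 0 0 0 0 x ->
  [/\ special 0 0 0 0 (botsp x), botsp (botsp x) = x,
      botsp x != x & adj x (botsp x)].
Proof.
have CR1 : dhb_cross (None : hbV k0) (Some (inord 0) : hbV k1).
  by rewrite /dhb_cross /hb_u /hb_hub !eqSome !ordE /= !inordK' // !eqxx !orbT.
have CR2 : dhb_cross (Some (inord 0) : hbV k0) (None : hbV k1).
  by rewrite /dhb_cross /hb_u /hb_hub !eqSome !ordE /= !inordK' // !eqxx !orbT.
have I0 : forall n, (inord 0 : 'I_n.+1) <= 0 by move=> n; rewrite inordK'.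
move=> /spec4 [->|->|->|->]; rewrite /botsp /swap2 /= ?eqxx /=.
- by split.
- by split.
- by split.
- by split.
Qed.

Definition good (s : V -> V) := forall z, [/\ s (s z) = z, s z != z & adj z (s z)].

Lemma good_hub a0 b0 : ~~ odd a0 -> a0 <= k0.*2 -> ~~ odd b0 -> b0 <= k1.*2 ->
  good (sigma a0 a0 b0 b0 (hubsp a0 b0)).
Proof. by move=> Oa Ha Ob Hb; apply: tmpl => //; exact: hub_ok. Qed.
Lemma good_top : good (sigma k0.*2 k0.*2 k1.*2 k1.*2 topsp).
Proof. by apply: tmpl; rewrite ?odd_double //; exact: top_ok. Qed.
Lemma good_bot : good (sigma 0 0 0 0 botsp).
Proof. by apply: tmpl => //; exact: bot_ok. Qed.

Lemma specG0 s0 t0 s1 t1 : special s0 t0 s1 t1 G0. Proof. by []. Qed.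
Lemma specG1 s0 t0 s1 t1 : special s0 t0 s1 t1 G1. Proof. by []. Qed.

Lemma pathA i : i < k0.*2 -> exists s, good s /\ s (A i) = A i.+1.
Proof.
move=> Hi; case Oi: (odd i).
- exists (sigma 0 0 0 0 (hubsp 0 0)); split; first exact: good_hub.
  have i0 : 0 < i by case: i Oi {Hi}.
  rewrite sigmaA; [| exact: ltnW | by rewrite leqn0 -lt0n i0].
  by rewrite /pp ltn0 Oi.
- exists (sigma k0.*2 k0.*2 0 0 (hubsp k0.*2 0)); split.
    by apply: good_hub; rewrite ?odd_double.
  rewrite sigmaA; [| exact: ltnW | by rewrite negb_and -ltnNge Hi].
  by rewrite /pp Hi Oi.
Qed.

Lemma pathB i : i < k1.*2 -> exists s, good s /\ s (B i) = B i.+1.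
Proof.
move=> Hi; case Oi: (odd i).
- exists (sigma 0 0 0 0 (hubsp 0 0)); split; first exact: good_hub.
  have i0 : 0 < i by case: i Oi {Hi}.
  rewrite sigmaB; [| exact: ltnW | by rewrite leqn0 -lt0n i0].
  by rewrite /pp ltn0 Oi.
- exists (sigma 0 0 k1.*2 k1.*2 (hubsp 0 k1.*2)); split.
    by apply: good_hub; rewrite ?odd_double.
  rewrite sigmaB; [| exact: ltnW | by rewrite negb_and -ltnNge Hi].
  by rewrite /pp Hi Oi.
Qed.

Lemma topG0 : sigma k0.*2 k0.*2 k1.*2 k1.*2 topsp G0 = G1.
Proof. by rewrite sigmaS // /topsp /swap2. Qed.
Lemma topA : sigma k0.*2 k0.*2 k1.*2 k1.*2 topsp (A k0.*2) = B k1.*2.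
Proof. by rewrite sigmaS ?specA // /topsp /swap2 /= eqxx. Qed.
Lemma botG0 : sigma 0 0 0 0 botsp G0 = B 0.
Proof. by rewrite sigmaS // /botsp /swap2. Qed.
Lemma botA : sigma 0 0 0 0 botsp (A 0) = G1.
Proof. by rewrite sigmaS ?specA // /botsp /swap2 /= eqxx. Qed.
Lemma hubG0 a0 : sigma a0 a0 0 0 (hubsp a0 0) G0 = A a0.
Proof. by rewrite sigmaS // hubsp_G0. Qed.
Lemma hubG1 b0 : sigma 0 0 b0 b0 (hubsp 0 b0) G1 = B b0.
Proof. by rewrite sigmaS // hubsp_G1. Qed.

Lemma edge_pm x y : adj x y ->
  exists s, good s /\ (s x = y \/ s y = x).
Proof.
have GT := good_top; have GB := good_bot.
case: (vcase x) => [[i Hi ->]|->|[i Hi ->]|->];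
case: (vcase y) => [[j Hj ->]|->|[j Hj ->]|->];
rewrite /vA /vB /g0 /g1 /= /dhb_cross /hb_v /hb_u /hb_hub
   ?eqSome ?eqSN ?eqNS ?eqNN ?ordE /= ?inordK' ?andbF ?andbT ?orbF ?orFb // => H.
- case/orP: H => /eqP E.
    have [s [Gs Es]] := pathA (i:=i) ltac:(lia).
    by exists s; split => //; left; rewrite -E.
  have [s [Gs Es]] := pathA (i:=j) ltac:(lia).
  by exists s; split => //; right; rewrite -E.
- exists (sigma i i 0 0 (hubsp i 0)); split; first exact: good_hub.
  by right; rewrite hubG0.
- move/andP: H => [/eqP -> /eqP ->].
  by exists (sigma k0.*2 k0.*2 k1.*2 k1.*2 topsp); split => //; left; rewrite topA.
- by exists (sigma 0 0 0 0 botsp); split => //; left; move/eqP: H => ->; rewrite botA.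
- exists (sigma j j 0 0 (hubsp j 0)); split; first exact: good_hub.
  by left; rewrite hubG0.
- by exists (sigma 0 0 0 0 botsp); split => //; left; move/eqP: H => ->; rewrite botG0.
- by exists (sigma k0.*2 k0.*2 k1.*2 k1.*2 topsp); split => //; left; rewrite topG0.
- move/andP: H => [/eqP -> /eqP ->].
  by exists (sigma k0.*2 k0.*2 k1.*2 k1.*2 topsp); split => //; right; rewrite topA.
- by exists (sigma 0 0 0 0 botsp); split => //; right; move/eqP: H => ->; rewrite botG0.
- case/orP: H => /eqP E.
    have [s [Gs Es]] := pathB (i:=i) ltac:(lia).
    by exists s; split => //; left; rewrite -E.
  have [s [Gs Es]] := pathB (i:=j) ltac:(lia).
  by exists s; split => //; right; rewrite -E.
- exists (sigma 0 0 i i (hubsp 0 i)); split; first exact: good_hub.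
  by right; rewrite hubG1.
- by exists (sigma 0 0 0 0 botsp); split => //; right; move/eqP: H => ->; rewrite botA.
- by exists (sigma k0.*2 k0.*2 k1.*2 k1.*2 topsp); split => //; right; rewrite topG0.
- exists (sigma 0 0 j j (hubsp 0 j)); split; first exact: good_hub.
  by left; rewrite hubG1.
Qed.


Lemma connV (T' : finType) (r : rel T') (h : V -> T') :
  (forall u v, adj u v -> r (h u) (h v)) -> forall v, connect r (h G0) (h v).
Proof.
move=> Hr.
have HA : forall i, i <= k0.*2 -> connect r (h G0) (h (A i)).
  elim=> [|i IH] Hi.
    by apply: connect1; apply: Hr; rewrite /= inordK'.
  apply: connect_trans (IH (ltnW Hi)) (connect1 _); apply: Hr.
  by rewrite /= /hb_adj !inordK' ?eqxx // ltnW.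
have HG1 : connect r (h G0) (h G1) by apply: connect1; apply: Hr.
have HB : forall i, i <= k1.*2 -> connect r (h G0) (h (B i)).
  elim=> [|i IH] Hi.
    apply: connect1; apply: Hr; rewrite /= /dhb_cross /hb_u /hb_hub !eqSome !ordE /= inordK' // !orbT.
  apply: connect_trans (IH (ltnW Hi)) (connect1 _); apply: Hr.
  by rewrite /= /hb_adj !inordK' ?eqxx // ltnW.
by move=> v; case: (vcase v) => [[i Hi ->]|->|[i Hi ->]|->] //; [exact: HA | exact: HB].
Qed.

End E.

Lemma transfer (T : finType) (e : rel T) k0 k1 (f : dhbV k0 k1 -> T) (g : T -> dhbV k0 k1)
  (fK : cancel f g) (gK : cancel g f)
  (Hf : forall x y, e (f x) (f y) = dhb_adj x y)
  (R : pred (dhbV k0 k1)) (S : {set T}) (s : dhbV k0 k1 -> dhbV k0 k1) :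
  (forall x, (x \in S) = R (g x)) ->
  (forall z, R z -> [/\ R (s z), s (s z) = z, s z != z & dhb_adj z (s z)]) ->
  perfect_matching_on e S [set [set x; f (s (g x))] | x in S].
Proof.
move=> HS Hs; apply: (pm_of_inv (s := fun x => f (s (g x)))) => x; rewrite HS => Rx.
have [R1 E1 N1 A1] := Hs _ Rx.
split.
- by rewrite HS fK.
- by rewrite fK E1 gK.
- apply/eqP => E; move: N1; by rewrite -{2}E fK eqxx.
- by rewrite -{1}(gK x) Hf.
Qed.

Theorem proposition5p11 (T : finType) (e : rel T) :
  simple_graph e -> in_G2 e -> cycle_extendable e.
Proof.
move=> [Se Ie] [k0 [k1 [f [K0 K1 [g fK gK] Hf]]]].
have He : forall x y, e x y = dhb_adj (g x) (g y) by move=> x y; rewrite -Hf !gK.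
have ginj : injective g := can_inj gK.
have finj : injective f := can_inj fK.
split; first split.
- apply: leq_trans (max_card [set f (g0 k0 k1); f (g1 k0 k1)]).
  by rewrite cards2 (inj_eq finj).
- move=> x y.
  have C : forall v, connect e (f (g0 k0 k1)) (f v).
    by apply: connV => // u v; rewrite Hf.
  have Cs := sym_connect_sym Se.
  rewrite -(gK x) -(gK y); apply: connect_trans (C _).
  by rewrite Cs.
- move=> x y Exy; rewrite He in Exy.
  have [s [Gs Hxy]] := edge_pm K0 K1 Exy.
  exists [set [set z; f (s (g z))] | z in [set: T]]; split.
    apply: (transfer fK gK Hf (R := predT)) => [z|z _]; first by rewrite inE.
    by have [? ? ?] := Gs z.
  case: Hxy => E.
    by apply/imsetP; exists x; rewrite ?inE // E gK.
  by apply/imsetP; exists y; rewrite ?inE // E gK setUC.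
- move=> c [Uc Cc Sc Ev].
  set c' := map g c.
  have Uc' : uniq c' by rewrite (map_inj_uniq ginj).
  have Cc' : cycle (@dhb_adj k0 k1) c'.
    by rewrite cycle_map (eq_cycle (e' := e)) // => x y; rewrite /= He.
  have [s Hs] := cyc_pm K0 K1 Uc' Cc' ltac:(by rewrite size_map) ltac:(by rewrite size_map).
  exists [set [set z; f (s (g z))] | z in ~: [set x in c]].
  apply: (transfer fK gK Hf (R := fun z => z \notin c')) => //.
  by move=> x; rewrite !inE (mem_map ginj).
Qed.
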